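(* Let $\Lambda$ be a locally-convex, row-finite $k$-graph and $R$ a commutative ring with $1$. Let $I$ be a basic graded ideal of $KP_R(\Lambda)$. Let $(q,t)$ be the universal Kumjian–Pask family of $KP_R(\Lambda\setminus H(I))$ and $(p,m)$ that of $KP_R(\Lambda)$. Then $\Lambda\setminus H(I)$ is a locally-convex row-finite $k$-graph, and there is an $R$-algebra isomorphism $\pi: KP_R(\Lambda\setminus H(I))\to KP_R(\Lambda)/I$ such that \[\pi(q_v)=p_v+I,\qquad \pi(t_\lambda)=m_\lambda+I,\qquad \pi(t_{\mu^*})=m_{\mu^*}+I\] for all $v\in\Lambda^0\setminus H(I)$ and all non-vertex paths $\lambda,\mu$ of $\Lambda\setminus H(I)$.
   Context: A $k$-graph $(\Lambda,d)$ is a countable category $\Lambda$ with a functor $d:\Lambda\to\mathbb{N}^k$ (the degree) satisfying unique factorization: whenever $d(\lambda)=m+n$ there are unique $\mu,\nu\in\Lambda$ with $d(\mu)=m$, $d(\nu)=n$, $\lambda=\mu\nu$. Morphisms are called paths; objects are identified with the paths of degree $0$ and called vertices, forming $\Lambda^0$. $r,s$ are the range and source (codomain and domain) maps; $\lambda\mu$ is defined when $s(\lambda)=r(\mu)$. $\mathbb{N}^k$ is ordered coordinatewise, $e_i$ are the standard generators, $\Lambda^m=d^{-1}(m)$, and for $v\in\Lambda^0$, $E\subseteq\Lambda$: $vE=\{\lambda\in E: r(\lambda)=v\}$, $Ev=\{\lambda\in E:s(\lambda)=v\}$. $\Lambda$ is row-finite if $v\Lambda^m$ is finite for all $v,m$.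 $\Lambda^{\le n}=\{\lambda: d(\lambda)\le n,\ \text{and } d(\lambda)_i<n_i \Rightarrow s(\lambda)\Lambda^{e_i}=\emptyset\}$. $\Lambda$ is locally-convex if for all $v\in\Lambda^0$, $i\ne j$, $\lambda\in v\Lambda^{e_i}$, $\mu\in v\Lambda^{e_j}$, the sets $s(\lambda)\Lambda^{e_j}$ and $s(\mu)\Lambda^{e_i}$ are nonempty. A set $H\subseteq\Lambda^0$ is hereditary if $r(\lambda)\in H$ implies $s(\lambda)\in H$, and saturated if $s(v\Lambda^{\le e_i})\subseteq H$ for some $i$ implies $v\in H$. For $H\subseteq \Lambda^0$, $\Lambda\setminus H$ denotes the subcategory with objects $\Lambda^0\setminus H$ and morphisms $\{\lambda: r(\lambda),s(\lambda)\notin H\}$, with the restricted degree map. Kumjian–Pask algebras: $R$ is a commutative ring with $1$. Ghost paths are formal symbols $\lambda^*$ ($\lambda\in\Lambda$), with $v^*=v$ for vertices, $r(\lambda^* )=s(\lambda)$, $s(\lambda^* )=r(\lambda)$, $(\mu\lambda)^*=\lambda^*\mu^*$. A Kumjian–Pask $\Lambda$-family $(P,S)$ in an $R$-algebra consists of $P:\Lambda^0\to A$ and $S$ defined on non-vertex paths and non-vertex ghost paths such that: (KP1) the $P_v$ are mutually orthogonal idempotents; (KP2) $S_\lambda S_\mu=S_{\lambda\mu}$, $S_{\mu^*}S_{\lambda^*}=S_{(\lambda\mu)^*}$, $P_{r(\lambda)}S_\lambda=S_\lambda=S_\lambda P_{s(\lambda)}$, $P_{s(\lambda)}S_{\lambda^*}=S_{\lambda^*}=S_{\lambda^*}P_{r(\lambda)}$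 whenever $r(\mu)=s(\lambda)$; (KP3) $S_{\lambda^*}S_\mu=\delta_{\lambda,\mu}P_{s(\lambda)}$ for $n\in\mathbb{N}^k\setminus\{0\}$, $\lambda,\mu\in\Lambda^{\le n}$; (KP4) $P_v=\sum_{\lambda\in v\Lambda^{\le n}}S_\lambda S_{\lambda^*}$ for all $v$ and $n\ne0$. $KP_R(\Lambda)$ is the universal $R$-algebra generated by a Kumjian–Pask $\Lambda$-family $(p,s)$ (with $s_v:=p_v$); it equals $\mathrm{span}_R\{s_\alpha s_{\beta^*}: s(\alpha)=s(\beta)\}$ and is $\mathbb{Z}^k$-graded by $KP_R(\Lambda)_n=\mathrm{span}\{s_\alpha s_{\beta^*}: d(\alpha)-d(\beta)=n\}$. An ideal $I$ is graded if $\{I\cap KP_R(\Lambda)_n\}$ is a grading of $I$ (the homogeneous components of each element of $I$ lie in $I$). An ideal $I$ is basic if $rp_v\in I$ with $r\in R\setminus\{0\}$ implies $p_v\in I$. For an ideal $I$, $H(I)=\{v\in\Lambda^0: p_v\in I\}$. *)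

(* Defs.v *)
From HB Require Import structures.
From mathcomp Require Import all_boot all_order all_algebra.
From Stdlib Require List.

Set Implicit Arguments.
Unset Strict Implicit.
Unset Printing Implicit Defensive.

Import GRing.Theory.
Local Open Scope ring_scope.

Definition Nk (k : nat) := {ffun 'I_k -> nat}.
Definition Zk (k : nat) := {ffun 'I_k -> int}.

Definition nk0 (k : nat) : Nk k := [ffun => 0%N].
Definition nkadd (k : nat) (m n : Nk k) : Nk k := [ffun i => (m i + n i)%N].
Definition nke (k : nat) (i : 'I_k) : Nk k := [ffun j => nat_of_bool (j == i)].
Definition nkle (k : nat) (m n : Nk k) : bool := [forall i, (m i <= n i)%N].

(* Composition is the (partial) operation of the category, encoded    *)
(* as its graph: [kg_comp l m n] means  n = l m  (defined only when   *)
(* s(l) = r(m)).  Objects (vertices) form their own type; a vertex v  *)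
(* is identified with its identity morphism, the path of degree 0     *)
(* with range and source v.                                           *)

Record kgraph_data (k : nat) := KGraphData {
  kg_vert : Type;
  kg_path : Type;
  kg_r : kg_path -> kg_vert;
  kg_s : kg_path -> kg_vert;
  kg_comp : kg_path -> kg_path -> kg_path -> Prop;
  kg_deg : kg_path -> Nk k
}.
Arguments kg_r {k} g _ : rename.
Arguments kg_s {k} g _ : rename.
Arguments kg_comp {k} g _ _ _ : rename.
Arguments kg_deg {k} g _ : rename.

Section KGraph.
Variables (k : nat) (G : kgraph_data k).
Local Notation V := (kg_vert G).
Local Notation P := (kg_path G).
Local Notation r := (kg_r G).
Local Notation s := (kg_s G).
Local Notation comp := (kg_comp G).
Local Notation d := (kg_deg G).

Definition is_kgraph : Prop :=
  (exists f : P -> nat, injective f) /\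
  (exists g : V -> nat, injective g) /\
  (forall l m n, comp l m n -> [/\ s l = r m, r n = r l & s n = s m]) /\
  (forall l m, s l = r m -> exists n, comp l m n) /\
  (forall l m n n', comp l m n -> comp l m n' -> n = n') /\
  (forall l m n lm mn x, comp l m lm -> comp m n mn -> comp lm n x ->
      comp l mn x) /\
  (forall v, exists e, [/\ r e = v, s e = v, d e = nk0 k,
      (forall l, r l = v -> comp e l l) & (forall l, s l = v -> comp l e l)]) /\
  (forall l m n, comp l m n -> d n = nkadd (d l) (d m)) /\
  (forall l (a b : Nk k), d l = nkadd a b ->
     exists mu nu, [/\ comp mu nu l, d mu = a, d nu = b &
       forall mu' nu', comp mu' nu' l -> d mu' = a -> d nu' = b ->
         mu' = mu /\ nu' = nu]).

Definition row_finite : Prop :=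
  forall (v : V) (m : Nk k), exists sq : seq P,
    forall l, r l = v -> d l = m -> List.In l sq.

Definition le_n (n : Nk k) (l : P) : Prop :=
  nkle (d l) n /\
  forall i : 'I_k, (d l i < n i)%N ->
    ~ (exists e, r e = s l /\ d e = nke i).

Definition locally_convex : Prop :=
  forall (v : V) (i j : 'I_k), i != j ->
  forall l mu, r l = v -> d l = nke i -> r mu = v -> d mu = nke j ->
    (exists a, r a = s l /\ d a = nke j) /\
    (exists b, r b = s mu /\ d b = nke i).

End KGraph.

Section Remove.
Variables (k : nat) (G : kgraph_data k) (H : kg_vert G -> Prop).

Definition rm_vert := {v : kg_vert G | ~ H v}.
Definition rm_path :=
  {l : kg_path G | ~ H (kg_r G l) /\ ~ H (kg_s G l)}.
Definition rm_r (l : rm_path) : rm_vert :=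
  exist _ (kg_r G (proj1_sig l)) (proj1 (proj2_sig l)).
Definition rm_s (l : rm_path) : rm_vert :=
  exist _ (kg_s G (proj1_sig l)) (proj2 (proj2_sig l)).
Definition rm_comp (l m n : rm_path) : Prop :=
  kg_comp G (proj1_sig l) (proj1_sig m) (proj1_sig n).
Definition rm_deg (l : rm_path) : Nk k := kg_deg G (proj1_sig l).

Definition kg_remove : kgraph_data k :=
  @KGraphData k rm_vert rm_path rm_r rm_s rm_comp rm_deg.
End Remove.

Record nalg (R : comPzRingType) := NAlg {
  na_car :> lmodType R;
  na_mul : na_car -> na_car -> na_car;
  na_mulA : forall x y z, na_mul x (na_mul y z) = na_mul (na_mul x y) z;
  na_mulDl : forall x y z, na_mul (x + y) z = na_mul x z + na_mul y z;
  na_mulDr : forall x y z, na_mul x (y + z) = na_mul x y + na_mul x z;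
  na_mulZl : forall (a : R) x y, na_mul (a *: x) y = a *: na_mul x y;
  na_mulZr : forall (a : R) x y, na_mul x (a *: y) = a *: na_mul x y
}.
Arguments na_mul {R} A x y : rename.

Definition is_alg_hom (R : comPzRingType) (A B : nalg R) (f : A -> B) : Prop :=
  (forall x y, f (x + y) = f x + f y) /\
  (forall (a : R) x, f (a *: x) = a *: f x) /\
  (forall x y, f (na_mul A x y) = na_mul B (f x) (f y)).

(* Kumjian--Pask families.  [kS] is the family on paths, [kSg] on      *)
(* ghost paths; on vertices (degree-0 paths e) they are required to    *)
(* agree with [kP] (convention s_v := p_v, v^* = v).                   *)

Record kpfam (k : nat) (G : kgraph_data k) (R : comPzRingType) (A : nalg R) :=
  KPFam {
  kP : kg_vert G -> A;
  kS : kg_path G -> A;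
  kSg : kg_path G -> A
}.
Arguments kP {k G R A} f _ : rename.
Arguments kS {k G R A} f _ : rename.
Arguments kSg {k G R A} f _ : rename.

Section KP.
Variables (k : nat) (G : kgraph_data k) (R : comPzRingType) (A : nalg R).
Local Notation r := (kg_r G).
Local Notation s := (kg_s G).
Local Notation d := (kg_deg G).
Local Notation "x * y" := (na_mul A x y) : ring_scope.

Definition is_KP_family (F : kpfam G A) : Prop :=
  let P := kP F in let S := kS F in let Sg := kSg F in
  (forall e, d e = nk0 k -> S e = P (r e) /\ Sg e = P (r e)) /\
  (forall v, P v * P v = P v) /\
  (forall v w, v <> w -> P v * P w = 0) /\
  (forall l m n, d l <> nk0 k -> d m <> nk0 k -> kg_comp G l m n ->
     S l * S m = S n /\ Sg m * Sg l = Sg n) /\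
  (forall l, d l <> nk0 k ->
     [/\ P (r l) * S l = S l, S l * P (s l) = S l,
         P (s l) * Sg l = Sg l & Sg l * P (r l) = Sg l]) /\
  (forall n : Nk k, n <> nk0 k -> forall l m, le_n n l -> le_n n m ->
     (l = m -> Sg l * S m = P (s l)) /\ (l <> m -> Sg l * S m = 0)) /\
  (forall v (n : Nk k), n <> nk0 k ->
     exists sq : seq (kg_path G),
       [/\ List.NoDup sq,
           (forall l, List.In l sq <-> (r l = v /\ le_n n l)) &
           P v = \sum_(l <- sq) S l * Sg l]).

Definition homogeneous (F : kpfam G A) (n : Zk k) (x : A) : Prop :=
  exists sq : seq (R * kg_path G * kg_path G),
    (forall t, List.In t sq ->
       s t.1.2 = s t.2 /\
       forall i, (d t.1.2 i)%:Z - (d t.2 i)%:Z = n i) /\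
    x = \sum_(t <- sq) t.1.1 *: (kS F t.1.2 * kSg F t.2).

Definition is_ideal (I : A -> Prop) : Prop :=
  [/\ I 0,
      (forall x y, I x -> I y -> I (x + y)),
      (forall x, I x -> I (- x)),
      (forall (a : R) x, I x -> I (a *: x)) &
      (forall x y, I y -> I (x * y) /\ I (y * x))].

Definition graded_ideal (F : kpfam G A) (I : A -> Prop) : Prop :=
  forall x, I x -> exists sq : seq (Zk k * A),
    (forall t, List.In t sq -> homogeneous F t.1 t.2 /\ I t.2) /\
    x = \sum_(t <- sq) t.2.

Definition basic_ideal (F : kpfam G A) (I : A -> Prop) : Prop :=
  forall (a : R) v, a != 0 -> I (a *: kP F v) -> I (kP F v).

Definition HI (F : kpfam G A) (I : A -> Prop) : kg_vert G -> Prop :=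
  fun v => I (kP F v).

End KP.

Definition is_universal_KP (k : nat) (G : kgraph_data k) (R : comPzRingType)
  (A : nalg R) (F : kpfam G A) : Prop :=
  is_KP_family F /\
  forall (B : nalg R) (F' : kpfam G B), is_KP_family F' ->
    exists f : A -> B,
      [/\ is_alg_hom f,
          (forall v, f (kP F v) = kP F' v),
          (forall l, f (kS F l) = kS F' l),
          (forall l, f (kSg F l) = kSg F' l) &
          forall g : A -> B, is_alg_hom g ->
            (forall v, g (kP F v) = kP F' v) ->
            (forall l, g (kS F l) = kS F' l) ->
            (forall l, g (kSg F l) = kSg F' l) ->
            forall x, g x = f x].

Section Quot.
Variables (R : comPzRingType) (A : nalg R) (I : A -> Prop).

Definition coset (a : A) : A -> Prop := fun b => I (b - a).
Definition quot := {X : A -> Prop | exists a, X = coset a}.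
Definition qclass (a : A) : quot := exist _ (coset a) (ex_intro _ a erefl).

(* f : B -> A/I is an R-algebra homomorphism, where the operations of A/I
   are (a + I) + (b + I) = (a + b) + I, (a + I)(b + I) = ab + I,
   c (a + I) = c a + I. *)
Definition is_quot_hom (B : nalg R) (f : B -> quot) : Prop :=
  forall x y a b, f x = qclass a -> f y = qclass b ->
    [/\ f (x + y) = qclass (a + b),
        f (na_mul B x y) = qclass (na_mul A a b) &
        forall c : R, f (c *: x) = qclass (c *: a)].

Definition is_quot_iso (B : nalg R) (f : B -> quot) : Prop :=
  [/\ is_quot_hom f, injective f & forall X : quot, exists x, f x = X].
End Quot.

(* Main.v *)
From HB Require Import structures.
Require Import Defs.
From mathcomp Require Import all_boot all_order all_algebra.
From mathcomp Require Import boolp.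
From Stdlib Require Import ClassicalEpsilon ProofIrrelevance FunctionalExtensionality PropExtensionality.
From Stdlib Require Import Permutation.
Set Implicit Arguments. Unset Strict Implicit. Unset Printing Implicit Defensive.
Import GRing.Theory.
Local Open Scope ring_scope.

Section NA.
Variables (R : comPzRingType) (A : nalg R).
Local Notation "x * y" := (na_mul A x y) : ring_scope.
Lemma nmul0l y : 0 * y = 0.
Proof. by have := na_mulZl 0 0 y; rewrite !scale0r. Qed.
Lemma nmul0r y : y * 0 = 0.
Proof. by have := na_mulZr 0 y 0; rewrite !scale0r. Qed.
Lemma nmulNl x y : (- x) * y = - (x * y).
Proof. by apply/eqP; rewrite -subr_eq0 opprK -na_mulDl addNr nmul0l. Qed.
Lemma nmulNr x y : x * (- y) = - (x * y).
Proof. by apply/eqP; rewrite -subr_eq0 opprK -na_mulDr addNr nmul0r. Qed.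
Lemma nmulBl x y z : (x - y) * z = x * z - y * z.
Proof. by rewrite na_mulDl nmulNl. Qed.
Lemma nmulBr x y z : z * (x - y) = z * x - z * y.
Proof. by rewrite na_mulDr nmulNr. Qed.
Lemma nmul_suml (T : Type) (s : seq T) (f : T -> A) y :
  (\sum_(t <- s) f t) * y = \sum_(t <- s) (f t * y).
Proof. elim: s => [|t s IH]; first by rewrite !big_nil nmul0l.
by rewrite !big_cons na_mulDl IH. Qed.
Lemma nmul_sumr (T : Type) (s : seq T) (f : T -> A) y :
  y * (\sum_(t <- s) f t) = \sum_(t <- s) (y * f t).
Proof. elim: s => [|t s IH]; first by rewrite !big_nil nmul0r.
by rewrite !big_cons na_mulDr IH. Qed.
End NA.

Section Q.
Variables (R : comPzRingType) (A : nalg R) (I : A -> Prop) (HI : is_ideal I).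
Local Notation "x * y" := (na_mul A x y) : ring_scope.

Lemma I0 : I 0. Proof. by move: HI => []. Qed.
Lemma ID x y : I x -> I y -> I (x + y). Proof. by move: HI => [] _ h _ _ _; apply: h. Qed.
Lemma IN x : I x -> I (- x). Proof. by move: HI => [] _ _ h _ _; apply: h. Qed.
Lemma IB x y : I x -> I y -> I (x - y). Proof. by move=> ??; apply: ID => //; apply: IN. Qed.
Lemma IZ (a : R) x : I x -> I (a *: x). Proof. by move: HI => [] _ _ _ h _; apply: h. Qed.
Lemma IMl x y : I y -> I (x * y). Proof. by move: HI => [] _ _ _ _ h /(h x) []. Qed.
Lemma IMr x y : I y -> I (y * x). Proof. by move: HI => [] _ _ _ _ h /(h x) []. Qed.

Lemma sig_eq (T : Type) (P : T -> Prop) (x y : {t | P t}) :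
  proj1_sig x = proj1_sig y -> x = y.
Proof. case: x => x px; case: y => y py /= e; subst y; f_equal; apply: proof_irrelevance. Qed.

Lemma qclass_eq a b : I (a - b) -> qclass I a = qclass I b.
Proof.
move=> h; rewrite /qclass.
have e : coset I a = coset I b.
  apply: functional_extensionality => x; apply: propositional_extensionality.
  rewrite /coset; split => hx.
  - have -> : x - b = (x - a) + (a - b) by rewrite addrA subrK.
    exact: ID.
  - have -> : x - a = (x - b) - (a - b) by rewrite opprB addrA subrK.
    exact: IB.
by apply: sig_eq.
Qed.

Lemma qclass_inv a b : qclass I a = qclass I b -> I (a - b).
Proof.
move=> /(congr1 (@proj1_sig _ _)) /= e.
have : coset I b a by rewrite -e /coset subrr; exact: I0.
by [].
Qed.

Definition rep (X : quot I) : A :=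
  proj1_sig (constructive_indefinite_description _ (proj2_sig X)).
Lemma repK X : qclass I (rep X) = X.
Proof.
rewrite /rep; case: constructive_indefinite_description => a /= e.
by apply: sig_eq.
Qed.
Lemma rep_qclass a : I (rep (qclass I a) - a).
Proof. by apply: qclass_inv; rewrite repK. Qed.

Definition qT := quot I.
HB.instance Definition _ := gen_eqMixin qT.
HB.instance Definition _ := gen_choiceMixin qT.

Definition qadd (X Y : qT) : qT := qclass I (rep X + rep Y).
Definition qopp (X : qT) : qT := qclass I (- rep X).
Definition qzero : qT := qclass I 0.
Definition qscale (c : R) (X : qT) : qT := qclass I (c *: rep X).
Definition qmul (X Y : qT) : qT := qclass I (rep X * rep Y).

Lemma qaddE a b : qadd (qclass I a) (qclass I b) = qclass I (a + b).
Proof.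
apply: qclass_eq.
have -> : rep (qclass I a) + rep (qclass I b) - (a + b) =
  (rep (qclass I a) - a) + (rep (qclass I b) - b).
  by rewrite opprD addrACA.
apply: ID; exact: rep_qclass.
Qed.
Lemma qoppE a : qopp (qclass I a) = qclass I (- a).
Proof.
apply: qclass_eq; rewrite -opprD; apply: IN; exact: rep_qclass.
Qed.
Lemma qscaleE c a : qscale c (qclass I a) = qclass I (c *: a).
Proof.
apply: qclass_eq; rewrite -scalerBr; apply: IZ; exact: rep_qclass.
Qed.
Lemma qmulE a b : qmul (qclass I a) (qclass I b) = qclass I (a * b).
Proof.
apply: qclass_eq.
set a' := rep _; set b' := rep _.
have -> : a' * b' - a * b = (a' - a) * b' + a * (b' - b).
  by rewrite nmulBl nmulBr addrA subrK.
apply: ID; [apply: IMr | apply: IMl]; exact: rep_qclass.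
Qed.

Lemma qind (P : qT -> Prop) : (forall a, P (qclass I a)) -> forall X, P X.
Proof. by move=> h X; rewrite -(repK X). Qed.

Lemma qaddA : associative qadd.
Proof. by elim/qind=> a; elim/qind=> b; elim/qind=> c; rewrite !qaddE addrA. Qed.
Lemma qaddC : commutative qadd.
Proof. by elim/qind=> a; elim/qind=> b; rewrite !qaddE addrC. Qed.
Lemma qadd0 : left_id qzero qadd.
Proof. by elim/qind=> a; rewrite /qzero qaddE add0r. Qed.
Lemma qaddN : left_inverse qzero qopp qadd.
Proof. by elim/qind=> a; rewrite qoppE qaddE addNr. Qed.
HB.instance Definition _ := GRing.isZmodule.Build qT qaddA qaddC qadd0 qaddN.
Lemma qaddE' a b : (qclass I a : qT) + qclass I b = qclass I (a + b).
Proof. exact: qaddE. Qed.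

Lemma qscaleA a b v : qscale a (qscale b v) = qscale (GRing.mul a b) v.
Proof. by elim/qind: v => x; rewrite !qscaleE scalerA. Qed.
Lemma qscale1 : left_id 1 qscale.
Proof. by elim/qind=> x; rewrite qscaleE scale1r. Qed.
Lemma qscaleDr : right_distributive qscale +%R.
Proof. by move=> c; elim/qind=> a; elim/qind=> b; rewrite qaddE' !qscaleE qaddE' scalerDr. Qed.
Lemma qscaleDl v : {morph qscale^~ v: a b / a + b}.
Proof. by elim/qind: v => x a b; rewrite !qscaleE qaddE' scalerDl. Qed.
HB.instance Definition _ := GRing.Zmodule_isLmodule.Build R qT qscaleA qscale1 qscaleDr qscaleDl.
Lemma qscaleE' c a : c *: (qclass I a : qT) = qclass I (c *: a).
Proof. exact: qscaleE. Qed.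

Lemma qmulA x y z : qmul x (qmul y z) = qmul (qmul x y) z.
Proof. by elim/qind: x=> a; elim/qind: y=> b; elim/qind: z=> c; rewrite !qmulE na_mulA. Qed.
Lemma qmulDl x y z : qmul (x + y) z = qmul x z + qmul y z.
Proof. by elim/qind: x=> a; elim/qind: y=> b; elim/qind: z=> c; rewrite qaddE' !qmulE na_mulDl qaddE'. Qed.
Lemma qmulDr x y z : qmul x (y + z) = qmul x y + qmul x z.
Proof. by elim/qind: x=> a; elim/qind: y=> b; elim/qind: z=> c; rewrite qaddE' !qmulE na_mulDr qaddE'. Qed.
Lemma qmulZl (c : R) x y : qmul (c *: x) y = c *: qmul x y.
Proof. by elim/qind: x=> a; elim/qind: y=> b; rewrite qscaleE' !qmulE na_mulZl qscaleE'. Qed.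
Lemma qmulZr (c : R) x y : qmul x (c *: y) = c *: qmul x y.
Proof. by elim/qind: x=> a; elim/qind: y=> b; rewrite qscaleE' !qmulE na_mulZr qscaleE'. Qed.

Definition Qalg : nalg R := NAlg qmulA qmulDl qmulDr qmulZl qmulZr.

Lemma QaddE a b : (qclass I a : Qalg) + qclass I b = qclass I (a + b).
Proof. exact: qaddE. Qed.
Lemma QscaleE c a : c *: (qclass I a : Qalg) = qclass I (c *: a).
Proof. exact: qscaleE. Qed.
Lemma QmulE a b : na_mul Qalg (qclass I a) (qclass I b) = qclass I (a * b).
Proof. exact: qmulE. Qed.
Lemma Q0E : (0 : Qalg) = qclass I 0.
Proof. by []. Qed.
End Q.

Lemma nkaddC k (m n : Nk k) : nkadd m n = nkadd n m.
Proof. by apply/ffunP => i; rewrite !ffunE addnC. Qed.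
Lemma nkadd0 k (m : Nk k) : nkadd (nk0 k) m = m.
Proof. by apply/ffunP => i; rewrite !ffunE. Qed.
Lemma nkaddn0 k (m : Nk k) : nkadd m (nk0 k) = m.
Proof. by apply/ffunP => i; rewrite !ffunE addn0. Qed.
Lemma nkadd_eq0 k (m n : Nk k) : nkadd m n = nk0 k -> m = nk0 k /\ n = nk0 k.
Proof.
move=> e; have h i : (m i = 0 /\ n i = 0)%N.
  by have := congr1 (fun f : Nk k => f i) e; rewrite !ffunE => /eqP; rewrite addn_eq0 => /andP[/eqP-> /eqP->].
by split; apply/ffunP=> i; rewrite ffunE; case: (h i).
Qed.
Lemma nkleP k (m n : Nk k) : nkle m n <-> forall i, (m i <= n i)%N.
Proof. by rewrite /nkle; split => [/forallP|h]; last apply/forallP. Qed.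

Section KG.
Variables (k : nat) (G : kgraph_data k) (hG : is_kgraph G).
Local Notation V := (kg_vert G).
Local Notation P := (kg_path G).
Local Notation r := (kg_r G).
Local Notation s := (kg_s G).
Local Notation comp := (kg_comp G).
Local Notation d := (kg_deg G).

Lemma comp_rs l m n : comp l m n -> [/\ s l = r m, r n = r l & s n = s m].
Proof. by case: hG => _ [_ [h _]]; apply: h. Qed.
Lemma comp_ex l m : s l = r m -> exists n, comp l m n.
Proof. by case: hG => _ [_ [_ [h _]]]; apply: h. Qed.
Lemma comp_fun l m n n' : comp l m n -> comp l m n' -> n = n'.
Proof. by case: hG => _ [_ [_ [_ [h _]]]]; apply: h. Qed.
Lemma comp_assoc l m n lm mn x : comp l m lm -> comp m n mn -> comp lm n x -> comp l mn x.
Proof. by case: hG => _ [_ [_ [_ [_ [h _]]]]]; apply: h. Qed.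
Lemma id_ex v : exists e, [/\ r e = v, s e = v, d e = nk0 k,
      (forall l, r l = v -> comp e l l) & (forall l, s l = v -> comp l e l)].
Proof. by case: hG => _ [_ [_ [_ [_ [_ [h _]]]]]]; apply: h. Qed.
Lemma comp_deg l m n : comp l m n -> d n = nkadd (d l) (d m).
Proof. by case: hG => _ [_ [_ [_ [_ [_ [_ [h _]]]]]]]; apply: h. Qed.
Lemma ufact l (a b : Nk k) : d l = nkadd a b ->
     exists mu nu, [/\ comp mu nu l, d mu = a, d nu = b &
       forall mu' nu', comp mu' nu' l -> d mu' = a -> d nu' = b ->
         mu' = mu /\ nu' = nu].
Proof. by case: hG => _ [_ [_ [_ [_ [_ [_ [_ h]]]]]]]; apply: h. Qed.

Lemma deg0_id e : d e = nk0 k ->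
  [/\ s e = r e, (forall l, r l = r e -> comp e l l) & (forall l, s l = r e -> comp l e l)].
Proof.
move=> de.
have [i [ri si di hil hir]] := id_ex (r e).
have [j [rj sj dj hjl hjr]] := id_ex (s e).
have c1 : comp i e e by apply: hil.
have c2 : comp e j e by apply: hjr.
have de' : d e = nkadd (nk0 k) (nk0 k) by rewrite nkadd0.
have [mu [nu [_ _ _ u]]] := ufact de'.
have [e1 e2] := u _ _ c1 di de.
have [e3 e4] := u _ _ c2 de dj.
have ie : i = e by rewrite e1 e3.
have je : j = e by rewrite e4 e2.
have se : s e = r e by rewrite -{1}ie si.
split => // l hl.
- by have := hil l hl; rewrite ie.
- by have := hjr l (etrans hl (esym se)); rewrite je.
Qed.

Lemma id_unique e e' : d e = nk0 k -> d e' = nk0 k -> r e = r e' -> e = e'.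
Proof.
move=> de de' ree.
have [se hl _] := deg0_id de.
have [se' _ hr'] := deg0_id de'.
have c1 : comp e e' e' by apply: hl; rewrite ree.
have c2 : comp e e' e by apply: hr'; rewrite se ree.
exact: comp_fun c2 c1.
Qed.

Lemma comp_id_l l m n : d l = nk0 k -> comp l m n -> n = m.
Proof.
move=> dl c; have [slm _ _] := comp_rs c.
have [se hl _] := deg0_id dl.
apply: comp_fun c _; apply: hl; by rewrite -slm se.
Qed.

Lemma comp_id_r l m n : d m = nk0 k -> comp l m n -> n = l.
Proof.
move=> dm c; have [slm _ _] := comp_rs c.
have [se _ hr] := deg0_id dm.
by apply: comp_fun c _; apply: hr.
Qed.

Lemma le_n_exact l : le_n (d l) l.
Proof. by split; [apply/nkleP => i | move=> i; rewrite ltnn]. Qed.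

Lemma le_n_comp b g x m : comp b g x -> le_n m g -> le_n (nkadd (d b) m) x.
Proof.
move=> c [/nkleP hle hno]; have dx := comp_deg c; have [_ _ sx] := comp_rs c.
split.
- by apply/nkleP => i; rewrite dx !ffunE leq_add2l.
- move=> i; rewrite dx !ffunE ltn_add2l sx; exact: hno.
Qed.

Lemma le_n0 l : le_n (nk0 k) l -> d l = nk0 k.
Proof.
move=> [/nkleP h _]; apply/ffunP => i; have := h i; rewrite !ffunE.
by rewrite leqn0 => /eqP.
Qed.

Lemma nke_neq0 (i : 'I_k) : nke i <> nk0 k.
Proof. by move/ffunP => /(_ i); rewrite !ffunE eqxx. Qed.

End KG.

Section KPth.
Variables (k : nat) (G : kgraph_data k) (hG : is_kgraph G).
Variables (R : comPzRingType) (A : nalg R) (F : kpfam G A) (hF : is_KP_family F).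
Local Notation r := (kg_r G).
Local Notation s := (kg_s G).
Local Notation comp := (kg_comp G).
Local Notation d := (kg_deg G).
Local Notation "x * y" := (na_mul A x y) : ring_scope.
Local Notation P := (kP F).
Local Notation S := (kS F).
Local Notation Sg := (kSg F).

Lemma KPid e : d e = nk0 k -> S e = P (r e) /\ Sg e = P (r e).
Proof. by case: hF => h _; apply: h. Qed.
Lemma KPidem v : P v * P v = P v.
Proof. by case: hF => _ [h _]; apply: h. Qed.
Lemma KPorth v w : v <> w -> P v * P w = 0.
Proof. by case: hF => _ [_ [h _]]; apply: h. Qed.
Lemma KP2 l m n : d l <> nk0 k -> d m <> nk0 k -> comp l m n ->
     S l * S m = S n /\ Sg m * Sg l = Sg n.
Proof. by case: hF => _ [_ [_ [h _]]]; apply: h. Qed.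
Lemma KP2b l : d l <> nk0 k ->
     [/\ P (r l) * S l = S l, S l * P (s l) = S l,
         P (s l) * Sg l = Sg l & Sg l * P (r l) = Sg l].
Proof. by case: hF => _ [_ [_ [_ [h _]]]]; apply: h. Qed.
Lemma KP3 (n : Nk k) : n <> nk0 k -> forall l m, le_n n l -> le_n n m ->
     (l = m -> Sg l * S m = P (s l)) /\ (l <> m -> Sg l * S m = 0).
Proof. by case: hF => _ [_ [_ [_ [_ [h _]]]]]; apply: h. Qed.
Lemma KP4 v (n : Nk k) : n <> nk0 k ->
     exists sq : seq (kg_path G),
       [/\ List.NoDup sq,
           (forall l, List.In l sq <-> (r l = v /\ le_n n l)) &
           P v = \sum_(l <- sq) S l * Sg l].
Proof. by case: hF => _ [_ [_ [_ [_ [_ h]]]]]; apply: h. Qed.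

Lemma PS l : P (r l) * S l = S l.
Proof.
have [dl|dl] := pselect (d l = nk0 k); last by case: (KP2b dl).
by have [-> _] := KPid dl; rewrite KPidem.
Qed.
Lemma SP l : S l * P (s l) = S l.
Proof.
have [dl|dl] := pselect (d l = nk0 k); last by case: (KP2b dl).
by have [se _ _] := deg0_id hG dl; have [-> _] := KPid dl; rewrite se KPidem.
Qed.
Lemma PSg l : P (s l) * Sg l = Sg l.
Proof.
have [dl|dl] := pselect (d l = nk0 k); last by case: (KP2b dl).
by have [se _ _] := deg0_id hG dl; have [_ ->] := KPid dl; rewrite se KPidem.
Qed.
Lemma SgP l : Sg l * P (r l) = Sg l.
Proof.
have [dl|dl] := pselect (d l = nk0 k); last by case: (KP2b dl).
by have [_ ->] := KPid dl; rewrite KPidem.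
Qed.

Lemma Scomp l m n : comp l m n -> S l * S m = S n /\ Sg m * Sg l = Sg n.
Proof.
move=> c; have [slm rn sn] := comp_rs hG c.
have [dl|dl] := pselect (d l = nk0 k).
  have -> := comp_id_l hG dl c.
  have [se _ _] := deg0_id hG dl.
  have [-> ->] := KPid dl.
  by rewrite -se slm PS SgP.
have [dm|dm] := pselect (d m = nk0 k).
  have -> := comp_id_r hG dm c.
  have [-> ->] := KPid dm.
  by rewrite -slm SP PSg.
exact: KP2.
Qed.

Lemma KP3' (N : Nk k) l m : le_n N l -> le_n N m ->
  (l = m -> Sg l * S m = P (s l)) /\ (l <> m -> Sg l * S m = 0).
Proof.
have [N0|N0] := pselect (N = nk0 k); last exact: KP3.
subst N => hl hm.
have dl := le_n0 hl; have dm := le_n0 hm.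
have [sl _ _] := deg0_id hG dl.
have [_ ->] := KPid dl; have [-> _] := KPid dm.
split; first by move=> <-; rewrite sl KPidem.
move=> ne; apply: KPorth => e; apply: ne. by apply: (id_unique hG)...
Qed.

End KPth.

Lemma In_filter (T : Type) (a : pred T) (s : seq T) x :
  List.In x (filter a s) -> List.In x s /\ a x.
Proof.
elim: s => [|y s IH] //=; case: ifP => ay /=.
- by case=> [<-|/IH [? ?]]; [split; [left|] | split; [right|]].
- by move/IH => [? ?]; split; [right|].
Qed.

Lemma group_sum (R : comPzRingType) (T K : Type) (B : lmodType R)
  (key : T -> K) (c : T -> R) (g : K -> B) (s : seq T) :
  (forall t, List.In t s ->
     (\sum_(u <- s) (if `[< key u = key t >] then c u else 0)) *: g (key t) = 0) ->
  \sum_(u <- s) c u *: g (key u) = 0.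
Proof.
have : (size s <= size s)%N by [].
move: {2}(size s) => n; elim: n s => [|n IH] [|t s'] //=;
  rewrite ?big_nil // => hsz h.
set p := fun u => `[< key u = key t >].
rewrite (bigID p) /=.
have -> : \sum_(i <- t :: s' | p i) c i *: g (key i) =
          (\sum_(i <- t :: s') (if `[< key i = key t >] then c i else 0)) *: g (key t).
  rewrite -big_mkcond scaler_suml /=; apply: eq_bigr => u /asboolP e.
  by rewrite e.
rewrite h /=; last by left.
rewrite add0r -big_filter; apply: IH.
  by rewrite /= /p asboolT //= size_filter (leq_trans (count_size _ _)).
move=> t' ht'f; have [ht' nt'] := In_filter ht'f.
have kt : key t' <> key t by move=> e; move: nt'; rewrite /= /p asboolT.
rewrite big_filter -(h t' ht') ; congr (_ *: _).
rewrite [RHS](bigID p) /= [X in _ = X + _]big1 ?add0r; last first.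
  by move=> u /asboolP e; case: asboolP => // e'; exfalso; apply: kt; rewrite -e' e.
by [].
Qed.

Section Ker.
Variables (k : nat) (G : kgraph_data k) (hG : is_kgraph G).
Variables (R : comPzRingType) (A : nalg R) (F : kpfam G A) (hF : is_KP_family F).
Local Notation r := (kg_r G).
Local Notation s := (kg_s G).
Local Notation comp := (kg_comp G).
Local Notation d := (kg_deg G).
Local Notation "x * y" := (na_mul A x y) : ring_scope.
Local Notation P := (kP F).
Local Notation S := (kS F).
Local Notation Sg := (kSg F).
Local Notation path := (kg_path G).

Definition tprop (N : Nk k) (n : Zk k) (t : R * path * path) :=
  s t.1.2 = s t.2 /\ (forall i, (d t.1.2 i)%:Z - (d t.2 i)%:Z = n i) /\ le_n N t.2.

Definition tval (t : R * path * path) : A := t.1.1 *: (S t.1.2 * Sg t.2).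

Lemma max_deg (sq : seq (R * path * path)) :
  exists N : Nk k, forall t, List.In t sq -> nkle (d t.2) N.
Proof.
elim: sq => [|t sq [N hN]]; first by exists (nk0 k).
exists [ffun i => maxn (d t.2 i) (N i)] => u /= [<-|hu]; apply/nkleP => i; rewrite ffunE.
- exact: leq_maxl.
- by apply: leq_trans (leq_maxr _ _); move/nkleP: (hN u hu).
Qed.

Lemma expand_list (N m : Nk k) (n : Zk k) (c : R) a b (L : seq path) :
  s a = s b -> (forall i, (d a i)%:Z - (d b i)%:Z = n i) -> nkadd (d b) m = N ->
  (forall g, List.In g L -> r g = s b /\ le_n m g) ->
  exists sq', (forall t, List.In t sq' -> tprop N n t) /\
    \sum_(g <- L) c *: ((S a * (S g * Sg g)) * Sg b) = \sum_(t <- sq') tval t.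
Proof.
move=> sab hn hN; elim: L => [|g L IH] hL.
  by exists [::]; split => //; rewrite !big_nil.
have [sq' [h1 h2]] := IH (fun x hx => hL x (or_intror hx)).
have [rg lg] := hL g (or_introl erefl).
have sag : s a = r g by rewrite rg sab.
have sbg : s b = r g by rewrite rg.
have [x cx] := comp_ex hG sag.
have [y cy] := comp_ex hG sbg.
exists ((c, x, y) :: sq'); split.
- move=> t /= [<-|ht]; last exact: h1.
  have [_ _ sx] := comp_rs hG cx; have [_ _ sy] := comp_rs hG cy.
  split; first by rewrite /= sx sy.
  split; last by rewrite -hN /=; have := le_n_comp hG cy lg.
  move=> i /=; rewrite (comp_deg hG cx) (comp_deg hG cy) !ffunE -hn.
  by rewrite !PoszD opprD addrACA subrr addr0.
- rewrite !big_cons h2 /tval /=; congr (_ + _); congr (_ *: _).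
  have [<- _] := Scomp hG hF cx; have [_ <-] := Scomp hG hF cy.
  by rewrite -!na_mulA.
Qed.

Lemma expand_term (N : Nk k) (n : Zk k) (c : R) a b :
  s a = s b -> (forall i, (d a i)%:Z - (d b i)%:Z = n i) -> nkle (d b) N ->
  exists sq', (forall t, List.In t sq' -> tprop N n t) /\
    tval (c, a, b) = \sum_(t <- sq') tval t.
Proof.
move=> sab hn /nkleP hle.
have [e|ne] := pselect (d b = N).
  exists [:: (c, a, b)]; split; last by rewrite big_cons big_nil addr0.
  move=> t [<-|//]; split => //; split => //=; rewrite -e; exact: le_n_exact.
set m : Nk k := [ffun i => (N i - d b i)%N].
have hN : nkadd (d b) m = N by apply/ffunP => i; rewrite !ffunE subnKC.
have m0 : m <> nk0 k.
  move=> m0; apply: ne; rewrite -hN m0 nkaddn0 //.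
have [L [_ hL hP]] := KP4 hF (s b) m0.
have [sq' [h1 h2]] := expand_list c sab hn hN
  (fun g hg => proj1 (hL g) hg).
have e : S a * Sg b = \sum_(g <- L) S a * (S g * Sg g) * Sg b.
  by rewrite -{1}(SP hG hF a) sab hP nmul_sumr nmul_suml.
exists sq'; split => //; rewrite -h2 /tval /= e scaler_sumr. by apply: eq_bigr.
Qed.
End Ker.

Lemma eq_big_In (T : Type) (V : zmodType) (sq : seq T) (F1 F2 : T -> V) :
  (forall u, List.In u sq -> F1 u = F2 u) -> \sum_(u <- sq) F1 u = \sum_(u <- sq) F2 u.
Proof.
elim: sq => [|u sq IH] h; first by rewrite !big_nil.
rewrite !big_cons h /=; [congr (_ + _); apply: IH => v hv; apply: h; right|left] => //.
Qed.

Section Ker2.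
Variables (k : nat) (G : kgraph_data k) (hG : is_kgraph G).
Variables (R : comPzRingType) (A : nalg R) (F : kpfam G A) (hF : is_KP_family F).
Variables (I : A -> Prop) (hI : is_ideal I) (hb : basic_ideal F I).
Variables (B : lmodType R) (f : A -> B).
Hypothesis fD : forall x y, f (x + y) = f x + f y.
Hypothesis fZ : forall (c : R) x, f (c *: x) = c *: f x.
Local Notation r := (kg_r G).
Local Notation s := (kg_s G).
Local Notation comp := (kg_comp G).
Local Notation d := (kg_deg G).
Local Notation "x * y" := (na_mul A x y) : ring_scope.
Local Notation P := (kP F).
Local Notation S := (kS F).
Local Notation Sg := (kSg F).
Local Notation path := (kg_path G).
Hypothesis hf : forall a b, s a = s b -> I (P (s b)) -> f (S a * Sg b) = 0.

Lemma f0 : f 0 = 0.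
Proof. by have := fD 0 0; rewrite addr0 => /eqP; rewrite -subr_eq subrr eq_sym => /eqP. Qed.
Lemma f_sum (T : Type) (sq : seq T) (F1 : T -> A) :
  f (\sum_(u <- sq) F1 u) = \sum_(u <- sq) f (F1 u).
Proof. elim: sq => [|u sq IH]; rewrite ?big_nil ?f0 // !big_cons fD IH //. Qed.

Lemma expand_all (N : Nk k) (n : Zk k) (sq : seq (R * path * path)) :
  (forall t, List.In t sq -> s t.1.2 = s t.2 /\
       (forall i, (d t.1.2 i)%:Z - (d t.2 i)%:Z = n i) /\ nkle (d t.2) N) ->
  exists sq', (forall t, List.In t sq' -> tprop N n t) /\
    \sum_(t <- sq) tval F t = \sum_(t <- sq') tval F t.
Proof.
elim: sq => [|t sq IH] h; first by exists [::]; rewrite !big_nil.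
have [sq1 [h1 e1]] := IH (fun u hu => h u (or_intror hu)).
case: t h => [[c a] b] h.
have [sab [hn hle]] := h _ (or_introl erefl).
have [sq2 [h2 e2]] := expand_term hG hF c sab hn hle.
exists (sq2 ++ sq1); split.
  by move=> t hin; case: (List.in_app_or _ _ _ hin) => ?; [apply: h2 | apply: h1].
by rewrite big_cons big_cat e1 e2.
Qed.

Lemma ker_homog (n : Zk k) z : homogeneous F n z -> I z -> f z = 0.
Proof.
move=> [sq [hsq ez]] Iz.
have [N hN] := max_deg sq.
have [sq' [h1 h2]] := expand_all (N:=N) (n:=n) (sq:=sq)
  (fun t ht => conj (proj1 (hsq t ht)) (conj (proj2 (hsq t ht)) (hN t ht))).
have ez' : z = \sum_(t <- sq') tval F t by rewrite -h2 ez.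
rewrite ez' f_sum.
rewrite (eq_bigr (fun t => t.1.1 *: f (S t.1.2 * Sg t.2))); last by move=> t _; rewrite /tval fZ.
apply: (group_sum (key := fun t => (t.1.2, t.2)) (c := fun t => t.1.1)
   (g := fun p => f (S p.1 * Sg p.2))).
move=> t ht; have [sab [hn lb]] := h1 t ht.
have [hw|hw] := pselect (I (P (s t.2))).
  by rewrite /= hf // scaler0.
set coef := \sum_(u <- _) _.
suff -> : coef = 0 by rewrite scale0r.
case: (eqVneq coef 0) => // ne; exfalso; apply: hw; apply: (hb ne).
have <- : Sg t.1.2 * (z * S t.2) = coef *: P (s t.2).
  rewrite ez' nmul_suml nmul_sumr /coef scaler_suml.
  apply: eq_big_In => u hu; have [sau [hnu lbu]] := h1 u hu.
  rewrite /tval na_mulZl na_mulZr -na_mulA na_mulA.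
  have [ebb|nbb] := pselect (u.2 = t.2).
  - have [e3 _] := KP3' hG hF lbu lb; rewrite (e3 ebb).
    have dau : d u.1.2 = d t.1.2.
      apply/ffunP => i; have := hnu i; rewrite -(hn i) ebb.
      by move/(congr1 (fun z => z + (d t.2 i)%:Z)); rewrite !subrK => -[].
    have la : le_n (d t.1.2) u.1.2 by rewrite -dau; exact: le_n_exact.
    have la' : le_n (d t.1.2) t.1.2 by exact: le_n_exact.
    have [eaa|naa] := pselect (t.1.2 = u.1.2).
    + have [e4 _] := KP3' hG hF la' la; rewrite (e4 eaa).
      rewrite eaa sau ebb (KPidem hF).
      by rewrite asboolT // eaa ebb.
    + have [_ e4] := KP3' hG hF la' la; rewrite (e4 naa).
      rewrite nmul0l scaler0 asboolF ?scale0r // => -[e1 _]; exact: naa.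
  - have [_ e3] := KP3' hG hF lbu lb; rewrite (e3 nbb).
    by rewrite nmul0r scaler0 asboolF ?scale0r // => -[_ e2].
apply: IMl => //; apply: IMr => //.
Qed.

Lemma ker_ideal x : graded_ideal F I -> I x -> f x = 0.
Proof.
move=> hg /hg [sq [h ->]]; rewrite f_sum.
rewrite (eq_big_In (F2 := fun _ => 0)); first by rewrite big1.
by move=> u /h [hu Iu]; exact: ker_homog hu Iu.
Qed.
End Ker2.

Lemma I_sum (R : comPzRingType) (A : nalg R) (I : A -> Prop) (hI : is_ideal I)
  (T : Type) (sq : seq T) (F1 : T -> A) :
  (forall u, List.In u sq -> I (F1 u)) -> I (\sum_(u <- sq) F1 u).
Proof.
elim: sq => [|u sq IH] h; first by rewrite big_nil; exact: I0.
rewrite big_cons; apply: ID => //; [apply: h; left | apply: IH => v hv; apply: h; right] => //.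
Qed.

Section Hs.
Variables (k : nat) (G : kgraph_data k) (hG : is_kgraph G).
Variables (R : comPzRingType) (A : nalg R) (F : kpfam G A) (hF : is_KP_family F).
Variables (I : A -> Prop) (hI : is_ideal I).
Local Notation r := (kg_r G).
Local Notation s := (kg_s G).
Local Notation comp := (kg_comp G).
Local Notation d := (kg_deg G).
Local Notation "x * y" := (na_mul A x y) : ring_scope.
Local Notation P := (kP F).
Local Notation S := (kS F).
Local Notation Sg := (kSg F).
Local Notation path := (kg_path G).
Local Notation H := (HI F I).

Lemma hered l : H (r l) -> H (s l).
Proof.
rewrite /HI => hr.
have [dl|dl] := pselect (d l = nk0 k).
  by have [-> _ _] := deg0_id hG dl.
have [e _] := KP3 hF dl (le_n_exact l) (le_n_exact l).
rewrite -(e erefl) -(PS hF l).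
by apply: IMl => //; apply: IMr.
Qed.

Lemma S_in l : H (s l) -> I (S l).
Proof. by move=> h; rewrite -(SP hG hF l); apply: IMl. Qed.
Lemma Sg_in l : H (s l) -> I (Sg l).
Proof. by move=> h; rewrite -(PSg hG hF l); apply: IMr. Qed.

Lemma satur w (i : 'I_k) : ~ H w -> (exists a, r a = w /\ d a = nke i) ->
  exists a, [/\ r a = w, d a = nke i & ~ H (s a)].
Proof.
move=> hw [a [ra da]].
apply: NNPP => hno; apply: hw; rewrite /HI.
have [L [_ hL ->]] := KP4 hF w (@nke_neq0 k i).
apply: I_sum => // g /hL [rg [/nkleP hle hno']].
apply: IMr => //; apply: S_in.
have dgi : (d g i = 1)%N.
  have := hle i; rewrite !ffunE eqxx.
  case e: (d g i) => [|[|m]] // _; exfalso.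
  have dg0 : d g = nk0 k.
    apply/ffunP => j; rewrite !ffunE; have := hle j; rewrite !ffunE.
    by case: eqP => [->|_]; rewrite ?e // leqn0 => /eqP.
  have [sg _ _] := deg0_id hG dg0.
  apply: (hno' i); first by rewrite e !ffunE eqxx.
  by exists a; rewrite ra sg rg.
have dg : d g = nke i.
  apply/ffunP => j; rewrite !ffunE; have := hle j; rewrite !ffunE.
  by case: eqP => [->|_]; rewrite ?dgi // leqn0 => /eqP.
apply: NNPP => ns; apply: hno; exists g; split => //.
Qed.

Local Notation G' := (kg_remove H).

Lemma rmv_eq (x y : rm_vert H) : proj1_sig x = proj1_sig y -> x = y.
Proof. exact: sig_eq. Qed.
Lemma rmp_eq (x y : rm_path H) : proj1_sig x = proj1_sig y -> x = y.
Proof. exact: sig_eq. Qed.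

Lemma le_n_rm (n : Nk k) (l : kg_path G') :
  le_n n l <-> le_n n (proj1_sig l).
Proof.
split.
- move=> [hle hno]; split => // i hi [e [re de]].
  have [e' [re' de' se']] := satur (proj2 (proj2_sig l)) (ex_intro _ e (conj re de)).
  have pe : ~ H (r e') /\ ~ H (s e') by rewrite re'; split => //; exact: (proj2 (proj2_sig l)).
  apply: (hno i hi); exists (exist _ e' pe); split => //.
  by apply: rmv_eq.
- move=> [hle hno]; split => // i hi [e [re de]].
  apply: (hno i hi); exists (proj1_sig e); split => //.
  exact: (congr1 (@proj1_sig _ _) re).
Qed.

Lemma remove_kgraph : is_kgraph G'.
Proof.
have [[fp ifp] [[fv ifv] [hrs [hex [hfun [hass [hid [hdeg hfac]]]]]]]] := hG.
split; first by exists (fun l : rm_path H => fp (proj1_sig l)) => x y /ifp /rmp_eq.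
split; first by exists (fun l : rm_vert H => fv (proj1_sig l)) => x y /ifv /rmv_eq.
split.
  move=> l m n /hrs [h1 h2 h3]; split; apply: rmv_eq => //=.
split.
  move=> l m /(congr1 (@proj1_sig _ _)) /= /hex [n c].
  have pn : ~ H (r n) /\ ~ H (s n).
    by have [_ -> ->] := hrs _ _ _ c; split; [exact: (proj1 (proj2_sig l)) | exact: (proj2 (proj2_sig m))].
  by exists (exist _ n pn).
split.
  by move=> l m n n' c c'; apply: rmp_eq; exact: hfun c c'.
split.
  by move=> l m n lm mn x; apply: hass.
split.
  move=> v; have [e [re se de hl hr]] := hid (proj1_sig v).
  have pe : ~ H (r e) /\ ~ H (s e) by rewrite re se; split; exact: (proj2_sig v).
  exists (exist _ e pe); split => //; try by apply: rmv_eq.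
  - by move=> l /(congr1 (@proj1_sig _ _)) /= hl'; apply: hl.
  - by move=> l /(congr1 (@proj1_sig _ _)) /= hr'; apply: hr.
split.
  by move=> l m n c; apply: hdeg.
move=> l a b hd.
have [mu [nu [c dmu dnu u]]] := hfac _ _ _ hd.
have [smn rl sl] := hrs _ _ _ c.
have pmu : ~ H (r mu) /\ ~ H (s mu).
  split; first by rewrite -rl; exact: (proj1 (proj2_sig l)).
  by rewrite smn => /hered; rewrite -sl; exact: (proj2 (proj2_sig l)).
have pnu : ~ H (r nu) /\ ~ H (s nu).
  split; first by rewrite -smn; exact: (proj2 pmu).
  by rewrite -sl; exact: (proj2 (proj2_sig l)).
exists (exist _ mu pmu), (exist _ nu pnu); split => //.
move=> mu' nu' c' dmu' dnu'.
have [e1 e2] := u _ _ c' dmu' dnu'.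
by split; apply: rmp_eq.
Qed.

Definition keep (L : seq path) : seq (rm_path H) :=
  flatten [seq (match pselect (~ H (r l) /\ ~ H (s l)) with
                | left p => [:: exist _ l p] | right _ => [::] end) | l <- L].

Lemma In_keep L (x : rm_path H) : List.In x (keep L) <-> List.In (proj1_sig x) L.
Proof.
elim: L => [|l L IH] //=; rewrite /keep /= -/(keep L).
case: pselect => p /=.
- split.
  + by case=> [<-|/IH]; [left | right].
  + case=> [e|/IH]; [left; apply: rmp_eq | right] => //.
- rewrite IH; split; [by right|case=> // e; exfalso; apply: p; rewrite e; exact: (proj2_sig x)].
Qed.

Lemma NoDup_keep L : List.NoDup L -> List.NoDup (keep L).
Proof.
elim: L => [|l L IH] //= nd; first by constructor.
inversion nd as [|? ? nl ndL]; subst.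
rewrite /keep /= -/(keep L); case: pselect => p /=; last exact: IH.
constructor; last exact: IH.
by move/In_keep.
Qed.

Lemma sum_keep (V : zmodType) L (g : path -> V) :
  (forall l, List.In l L -> ~ (~ H (r l) /\ ~ H (s l)) -> g l = 0) ->
  \sum_(x <- keep L) g (proj1_sig x) = \sum_(l <- L) g l.
Proof.
elim: L => [|l L IH] h; first by rewrite !big_nil.
rewrite /keep /= big_cat /= -/(keep L) big_cons IH; last by move=> x hx; apply: h; right.
case: pselect => p /=; first by rewrite big_cons big_nil addr0.
by rewrite big_nil h //; left.
Qed.

Lemma remove_rf : row_finite G -> row_finite G'.
Proof.
move=> rf v m; have [sq h] := rf (proj1_sig v) m.
exists (keep sq) => l rl dl; apply/In_keep; apply: h.
- exact: (congr1 (@proj1_sig _ _) rl).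
- exact: dl.
Qed.

Lemma remove_lc : locally_convex G -> locally_convex G'.
Proof.
move=> lc v i j ij l mu rl dl rmu dmu.
have [[a [ra da]] [b [rb db]]] := lc (proj1_sig v) i j ij (proj1_sig l) (proj1_sig mu)
   (congr1 (@proj1_sig _ _) rl) dl (congr1 (@proj1_sig _ _) rmu) dmu.
have [a' [ra' da' sa']] := satur (proj2 (proj2_sig l)) (ex_intro _ a (conj ra da)).
have [b' [rb' db' sb']] := satur (proj2 (proj2_sig mu)) (ex_intro _ b (conj rb db)).
have pa : ~ H (r a') /\ ~ H (s a') by rewrite ra'; split => //; exact: (proj2 (proj2_sig l)).
have pb : ~ H (r b') /\ ~ H (s b') by rewrite rb'; split => //; exact: (proj2 (proj2_sig mu)).
split; [exists (exist _ a' pa) | exists (exist _ b' pb)]; split => //; exact: rmv_eq.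
Qed.

End Hs.

Lemma qclass_sum (R : comPzRingType) (A : nalg R) (I : A -> Prop) (hI : is_ideal I)
  (T : Type) (sq : seq T) (F1 : T -> A) :
  (qclass I (\sum_(u <- sq) F1 u) : Qalg hI) = \sum_(u <- sq) (qclass I (F1 u) : Qalg hI).
Proof.
elim: sq => [|u sq IH]; first by rewrite !big_nil.
by rewrite !big_cons -IH QaddE.
Qed.

Lemma sum_perm (T : Type) (V : zmodType) (L1 L2 : seq T) (g : T -> V) :
  Permutation L1 L2 -> \sum_(x <- L1) g x = \sum_(x <- L2) g x.
Proof.
elim => [|x l l' _ IH|x y l|l l' l'' _ IH1 _ IH2].
- by [].
- by rewrite !big_cons IH.
- by rewrite !big_cons addrCA.
- by rewrite IH1 IH2.
Qed.

Section FamQ.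
Variables (k : nat) (G : kgraph_data k) (hG : is_kgraph G).
Variables (R : comPzRingType) (A : nalg R) (F : kpfam G A) (hF : is_KP_family F).
Variables (I : A -> Prop) (hI : is_ideal I).
Local Notation r := (kg_r G).
Local Notation s := (kg_s G).
Local Notation d := (kg_deg G).
Local Notation "x * y" := (na_mul A x y) : ring_scope.
Local Notation P := (kP F).
Local Notation S := (kS F).
Local Notation Sg := (kSg F).
Local Notation H := (HI F I).

Definition Fq : kpfam (kg_remove H) (Qalg hI) :=
  @KPFam _ (kg_remove H) _ (Qalg hI) (fun v => qclass I (P (proj1_sig v)))
    (fun l => qclass I (S (proj1_sig l))) (fun l => qclass I (Sg (proj1_sig l))).

Lemma notkept (l : kg_path G) : ~ H (r l) -> ~ (~ H (r l) /\ ~ H (s l)) -> H (s l).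
Proof. by move=> hr hn; apply: NNPP => hs; apply: hn. Qed.

Lemma Fq_KP : is_KP_family Fq.
Proof.
split.
  by move=> e de; have [h1 h2] := KPid hF de; rewrite /Fq /= h1 h2.
split.
  by move=> v; rewrite /Fq /= (qmulE hI) KPidem.
split.
  by move=> v w ne; rewrite /Fq /= (qmulE hI) KPorth // => e; apply: ne; apply: rmv_eq.
split.
  by move=> l m n dl dm c; have [e1 e2] := KP2 hF dl dm c; rewrite /Fq /= !(qmulE hI) e1 e2.
split.
  by move=> l dl; have [e1 e2 e3 e4] := KP2b hF dl; rewrite /Fq /= !(qmulE hI) e1 e2 e3 e4.
split.
  move=> n n0 l m hl hm.
  have hl' := (le_n_rm hG hF hI n l).1 hl; have hm' := (le_n_rm hG hF hI n m).1 hm.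
  have [e1 e2] := KP3 hF n0 hl' hm'.
  split => [e|ne]; rewrite /Fq /= (qmulE hI).
  - by rewrite e1 // e.
  - by rewrite e2 // => e; apply: ne; apply: rmp_eq.
move=> v n n0.
have [L [nd hL hP]] := KP4 hF (proj1_sig v) n0.
exists (keep F I L); split.
- exact: NoDup_keep.
- move=> l; rewrite In_keep hL (le_n_rm hG hF hI n l).
  split => -[e h]; split => //; first by apply: rmv_eq.
  exact: (congr1 (@proj1_sig _ _) e).
- rewrite /Fq /= hP qclass_sum.
  rewrite -(@sum_keep _ _ _ _ F I _ _ (fun l => (qclass I (S l * Sg l) : Qalg hI))).
    by apply: eq_bigr => x _; rewrite /Fq /= (qmulE hI).
  move=> l /hL [rl _] hn; rewrite Q0E; apply: qclass_eq => //; rewrite subr0.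
  apply: IMr => //; apply: (S_in hG hF) => //; apply: notkept hn.
  by rewrite rl; exact: (proj2_sig v).
Qed.
End FamQ.

Section FamB.
Variables (k : nat) (G : kgraph_data k) (hG : is_kgraph G).
Variables (R : comPzRingType) (A : nalg R) (F : kpfam G A) (hF : is_KP_family F).
Variables (I : A -> Prop) (hI : is_ideal I).
Local Notation r := (kg_r G).
Local Notation s := (kg_s G).
Local Notation d := (kg_deg G).
Local Notation P := (kP F).
Local Notation S := (kS F).
Local Notation Sg := (kSg F).
Local Notation H := (HI F I).
Variables (B : nalg R) (F' : kpfam (kg_remove H) B) (hF' : is_KP_family F').
Local Notation "x * y" := (na_mul B x y) : ring_scope.
Let hG' := remove_kgraph hG hF hI.

Definition PB (v : kg_vert G) : B :=
  match pselect (H v) with left _ => 0 | right p => kP F' (exist _ v p) end.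
Definition SB (l : kg_path G) : B :=
  match pselect (~ H (r l) /\ ~ H (s l)) with left p => kS F' (exist _ l p) | right _ => 0 end.
Definition SgB (l : kg_path G) : B :=
  match pselect (~ H (r l) /\ ~ H (s l)) with left p => kSg F' (exist _ l p) | right _ => 0 end.
Definition FB : kpfam G B := KPFam PB SB SgB.

Lemma PB_in v (p : ~ H v) : PB v = kP F' (exist _ v p).
Proof.
rewrite /PB; destruct (pselect (H v)) as [h|p']; first by exfalso; exact (p h).
by rewrite (proof_irrelevance _ p p').
Qed.
Lemma PB_out v : H v -> PB v = 0.
Proof. by move=> h; rewrite /PB; destruct (pselect (H v)). Qed.
Lemma SB_in l p : SB l = kS F' (exist _ l p).
Proof.
rewrite /SB; destruct (pselect (~ H (r l) /\ ~ H (s l))) as [p'|h]; last by exfalso; exact (h p).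
by rewrite (proof_irrelevance _ p p').
Qed.
Lemma SgB_in l p : SgB l = kSg F' (exist _ l p).
Proof.
rewrite /SgB; destruct (pselect (~ H (r l) /\ ~ H (s l))) as [p'|h]; last by exfalso; exact (h p).
by rewrite (proof_irrelevance _ p p').
Qed.
Lemma SB_out l : H (s l) -> SB l = 0.
Proof. move=> hs; rewrite /SB; destruct (pselect (~ H (r l) /\ ~ H (s l))) as [p|h]; [by exfalso; exact (proj2 p hs) | by []]. Qed.
Lemma SgB_out l : H (s l) -> SgB l = 0.
Proof. move=> hs; rewrite /SgB; destruct (pselect (~ H (r l) /\ ~ H (s l))) as [p|h]; [by exfalso; exact (proj2 p hs) | by []]. Qed.

Lemma in_rm l : ~ H (s l) -> ~ H (r l) /\ ~ H (s l).
Proof. by move=> h; split => // /(hered hG hF hI). Qed.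

Lemma FB_KP : is_KP_family FB.
Proof.
split.
  move=> e de /=; have [se _ _] := deg0_id hG de.
  have [hs|hs] := pselect (H (s e)).
    by rewrite SB_out // SgB_out // PB_out // -se.
  have p := in_rm hs.
  rewrite (SB_in p) (SgB_in p) (PB_in (proj1 p)).
  have [-> ->] := KPid hF' (e := exist _ e p) de.
  by split; congr (kP F' _); apply: rmv_eq.
split.
  move=> v /=; have [hv|hv] := pselect (H v); first by rewrite PB_out // nmul0l.
  by rewrite (PB_in hv) KPidem.
split.
  move=> v w ne /=; have [hv|hv] := pselect (H v); first by rewrite PB_out // nmul0l.
  have [hw|hw] := pselect (H w); first by rewrite (PB_out hw) nmul0r.
  rewrite (PB_in hv) (PB_in hw) KPorth // => e; apply: ne.
  exact: (congr1 (@proj1_sig _ _) e).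
split.
  move=> l m n dl dm c /=; have [slm rn sn] := comp_rs hG c.
  have [hs|hs] := pselect (H (s n)).
    rewrite (SB_out hs) (SgB_out hs) (SB_out (l:=m)) ?(SgB_out (l:=m)) ?nmul0r ?nmul0l //;
    by rewrite -sn.
  have pn := in_rm hs.
  have pm : ~ H (r m) /\ ~ H (s m).
    by apply: in_rm; rewrite -sn.
  have pl : ~ H (r l) /\ ~ H (s l).
    by split; [rewrite -rn; exact: (proj1 pn) | rewrite slm; exact: (proj1 pm)].
  rewrite (SB_in pl) (SB_in pm) (SB_in pn) (SgB_in pl) (SgB_in pm) (SgB_in pn).
  exact: (KP2 hF' (l := exist _ l pl) (m := exist _ m pm) (n := exist _ n pn)).
split.
  move=> l dl /=.
  have [hs|hs] := pselect (H (s l)).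
    rewrite (SB_out hs) (SgB_out hs) (PB_out hs) !nmul0r !nmul0l; split => //.
  have pl := in_rm hs.
  rewrite (SB_in pl) (SgB_in pl) (PB_in (proj1 pl)) (PB_in (proj2 pl)).
  have [e1 e2 e3 e4] := KP2b hF' (l := exist _ l pl) dl.
  have er : exist (fun v => ~ H v) (r l) (proj1 pl) = rm_r (exist _ l pl) by apply: rmv_eq.
  have es : exist (fun v => ~ H v) (s l) (proj2 pl) = rm_s (exist _ l pl) by apply: rmv_eq.
  by rewrite er es.
split.
  move=> n n0 l m hl hm /=.
  have [hs|hs] := pselect (H (s l)).
    rewrite (SgB_out hs) nmul0l; split => // e; rewrite PB_out //.
  have pl := in_rm hs.
  have [hm'|hm'] := pselect (H (s m)).
    rewrite (SB_out hm') nmul0r; split => // e; exfalso; apply: hs; by rewrite e.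
  have pm := in_rm hm'.
  have hl' : le_n n (exist _ l pl : kg_path (kg_remove H)) by apply/(le_n_rm hG hF hI).
  have hm2 : le_n n (exist _ m pm : kg_path (kg_remove H)) by apply/(le_n_rm hG hF hI).
  have [e1 e2] := KP3 hF' n0 hl' hm2.
  rewrite (SgB_in pl) (SB_in pm) (PB_in hs).
  split => [e|ne].
  - subst m; rewrite e1; last by apply: rmp_eq.
    by congr (kP F' _); apply: rmv_eq.
  - by rewrite e2 // => e; apply: ne; exact: (congr1 (@proj1_sig _ _) e).
move=> v n n0.
have [L [nd hL _]] := KP4 hF v n0.
exists L; split => //=.
have [hv|hv] := pselect (H v).
  rewrite PB_out // (eq_big_In (F2 := fun _ => 0)) ?big1 // => l /hL [rl _].
  by rewrite SB_out ?nmul0l //; apply: (hered hG hF hI); rewrite rl.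
have [L' [nd' hL' hP']] := KP4 hF' (exist _ v hv) n0.
rewrite (PB_in hv) hP'.
have perm : Permutation (keep F I L) L'.
  apply: NoDup_Permutation; [exact: NoDup_keep | exact: nd' | move=> x].
  rewrite In_keep hL hL' (le_n_rm hG hF hI n x).
  split => -[e h]; split => //; first by apply: rmv_eq.
  exact: (congr1 (@proj1_sig _ _) e).
rewrite -(sum_perm (fun x => kS F' x * kSg F' x) perm).
rewrite -(@sum_keep _ _ _ _ F I _ _ (fun l => SB l * SgB l)).
  apply: eq_bigr => x _; case: x => x px.
  by rewrite (SB_in px) (SgB_in px).
move=> l /hL [rl _] hn; rewrite SB_out ?nmul0l //.
apply: notkept hn; by rewrite rl.
Qed.
End FamB.

Section Img.
Variables (k : nat) (G : kgraph_data k) (R : comPzRingType) (A C : nalg R).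
Variables (F : kpfam G A) (hF : is_KP_family F) (h : A -> C) (hh : is_alg_hom h).

Lemma hD x y : h (x + y) = h x + h y. Proof. by case: hh. Qed.
Lemma hZ (c : R) x : h (c *: x) = c *: h x. Proof. by case: hh => _ []. Qed.
Lemma hM x y : h (na_mul A x y) = na_mul C (h x) (h y). Proof. by case: hh => _ []. Qed.
Lemma h0 : h 0 = 0.
Proof. by have := hD 0 0; rewrite addr0 => /eqP; rewrite -subr_eq subrr eq_sym => /eqP. Qed.
Lemma hsum (T : Type) (sq : seq T) (F1 : T -> A) :
  h (\sum_(u <- sq) F1 u) = \sum_(u <- sq) h (F1 u).
Proof. elim: sq => [|u sq IH]; rewrite ?big_nil ?h0 // !big_cons hD IH //. Qed.

Definition imgF : kpfam G C := KPFam (fun v => h (kP F v)) (fun l => h (kS F l)) (fun l => h (kSg F l)).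

Lemma imgF_KP : is_KP_family imgF.
Proof.
split.
  by move=> e de; have [e1 e2] := KPid hF de; rewrite /= e1 e2.
split; first by move=> v; rewrite /= -hM KPidem.
split; first by move=> v w ne; rewrite /= -hM KPorth // h0.
split.
  by move=> l m n dl dm c; have [e1 e2] := KP2 hF dl dm c; rewrite /= -!hM e1 e2.
split.
  by move=> l dl; have [e1 e2 e3 e4] := KP2b hF dl; rewrite /= -!hM e1 e2 e3 e4.
split.
  move=> n n0 l m hl hm; have [e1 e2] := KP3 hF n0 hl hm.
  by split => e; rewrite /= -hM; [rewrite (e1 e) | rewrite (e2 e) h0].
move=> v n n0; have [L [nd hL hP]] := KP4 hF v n0.
exists L; split => //=; rewrite hP hsum; apply: eq_bigr => l _; exact: hM.
Qed.
End Img.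

Unset Implicit Arguments.

Theorem mainTheorem1 (k : nat) (G : kgraph_data k) (R : comPzRingType)
  (A : nalg R) (F : kpfam G A) (I : A -> Prop)
  (B : nalg R) (F' : kpfam (kg_remove (HI F I)) B) :
  is_kgraph G -> row_finite G -> locally_convex G ->
  is_universal_KP F ->
  is_ideal I -> basic_ideal F I -> graded_ideal F I ->
  is_universal_KP F' ->
  [/\ is_kgraph (kg_remove (HI F I)),
      row_finite (kg_remove (HI F I)),
      locally_convex (kg_remove (HI F I)) &
      exists pi : B -> quot I,
        [/\ is_quot_iso pi,
            (forall v, pi (kP F' v) = qclass I (kP F (proj1_sig v))),
            (forall l, kg_deg _ l <> nk0 k ->
               pi (kS F' l) = qclass I (kS F (proj1_sig l))) &
            (forall l, kg_deg _ l <> nk0 k ->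
               pi (kSg F' l) = qclass I (kSg F (proj1_sig l)))]].
Proof.
move=> hG rf lc [hF hU] hI hb hg [hF' hU'].
have hG' := remove_kgraph hG hF hI.
split; [exact: hG' | exact: remove_rf rf | have := remove_lc hG hF hI lc; done | ].
have [th [thhom thP thS thSg _]] := hU' (Qalg hI) (Fq F hI) (Fq_KP hG hF hI).
have [ph [phhom phP phS phSg _]] := hU B (FB F') (FB_KP hG hF hI hF').
have phker : forall x, I x -> ph x = 0.
  move=> x; apply: (ker_ideal hG hF hI hb (f := ph)) => //.
  - exact: hD phhom.
  - exact: hZ phhom.
  - move=> a b _ hs; rewrite (hM phhom) phS phSg /= SgB_out //.
    exact: nmul0r.
have phN : forall b, ph (- b) = - ph b.
  by move=> b; rewrite -scaleN1r (hZ phhom) scaleN1r.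
have phsub : forall a b, I (a - b) -> ph a = ph b.
  move=> a b /phker; rewrite (hD phhom) phN => /eqP; rewrite subr_eq0 => /eqP //.
have phrep : forall a, ph (rep (qclass I a)) = ph a.
  by move=> a; apply: phsub; exact: rep_qclass.
pose g := fun x : B => ph (rep (th x)).
have thadd : forall x y, th (x + y) = qclass I (rep (th x) + rep (th y)).
  by move=> x y; rewrite (hD thhom) -(QaddE hI) !repK.
have thmul : forall x y, th (na_mul B x y) = qclass I (na_mul A (rep (th x)) (rep (th y))).
  by move=> x y; rewrite (hM thhom) -(QmulE hI) !repK.
have thsc : forall (c : R) x, th (c *: x) = qclass I (c *: rep (th x)).
  by move=> c x; rewrite (hZ thhom) -(QscaleE hI) !repK.
have ghom : is_alg_hom g.
  split; [|split].
  - by move=> x y; rewrite /g thadd phrep (hD phhom).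
  - by move=> c x; rewrite /g thsc phrep (hZ phhom).
  - by move=> x y; rewrite /g thmul phrep (hM phhom).
have idhom : is_alg_hom (fun x : B => x) by [].
have gid : forall x, g x = x.
  have [f0 [_ _ _ _ u]] := hU' B F' hF'.
  have g1 : forall v, g (kP F' v) = kP F' v.
    move=> v; rewrite /g thP /= phrep phP /=.
    by case: v => v pv; rewrite (PB_in F' pv).
  have g2 : forall l, g (kS F' l) = kS F' l.
    move=> l; rewrite /g thS /= phrep phS /=.
    by case: l => l pl; rewrite (SB_in F' pl).
  have g3 : forall l, g (kSg F' l) = kSg F' l.
    move=> l; rewrite /g thSg /= phrep phSg /=.
    by case: l => l pl; rewrite (SgB_in F' pl).
  by move=> x; rewrite (u g ghom g1 g2 g3); symmetry; apply: (u _ idhom).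
have qhom : is_alg_hom (fun a : A => (qclass I a : Qalg hI)).
  split; [|split].
  - by move=> x y; rewrite QaddE.
  - by move=> c x; rewrite QscaleE.
  - by move=> x y; rewrite QmulE.
have qI : forall a, I a -> (qclass I a : Qalg hI) = 0.
  by move=> a ha; rewrite Q0E; apply: qclass_eq => //; rewrite subr0.
have thph : forall a, th (ph a) = qclass I a.
  have [f1 [_ _ _ _ u]] := hU (Qalg hI) (imgF F (fun a => (qclass I a : Qalg hI)))
    (imgF_KP hF qhom).
  have tphom : is_alg_hom (fun a => th (ph a)).
    split; [|split].
    - by move=> x y; rewrite (hD phhom) (hD thhom).
    - by move=> c x; rewrite (hZ phhom) (hZ thhom).
    - by move=> x y; rewrite (hM phhom) (hM thhom).
  have t1 : forall v, th (ph (kP F v)) = qclass I (kP F v).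
    move=> v; rewrite phP /=.
    have [hv|hv] := pselect (HI F I v).
      by rewrite PB_out // (h0 thhom) qI.
    by rewrite (PB_in F' hv) thP.
  have t2 : forall l, th (ph (kS F l)) = qclass I (kS F l).
    move=> l; rewrite phS /=.
    have [hs|hs] := pselect (HI F I (kg_s G l)).
      by rewrite SB_out // (h0 thhom) qI //; apply: (S_in hG hF hI).
    by rewrite (SB_in F' (in_rm hG hF hI hs)) thS.
  have t3 : forall l, th (ph (kSg F l)) = qclass I (kSg F l).
    move=> l; rewrite phSg /=.
    have [hs|hs] := pselect (HI F I (kg_s G l)).
      by rewrite SgB_out // (h0 thhom) qI //; apply: (Sg_in hG hF hI).
    by rewrite (SgB_in F' (in_rm hG hF hI hs)) thSg.
  by move=> a; rewrite (u _ tphom t1 t2 t3); symmetry; apply: (u _ qhom).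
exists th; split => //.
split.
- move=> x y a b hx hy; split.
  + by rewrite (hD thhom) hx hy QaddE.
  + by rewrite (hM thhom) hx hy QmulE.
  + by move=> c; rewrite (hZ thhom) hx QscaleE.
- by move=> x y e; rewrite -(gid x) -(gid y) /g e.
- by move=> X; exists (ph (rep X)); rewrite thph repK.
Qed.
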